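(* Let $\mathbb{K}$ be a field of characteristic zero and $m$ a positive integer. Let $V_m$ be the set of all rational functions of the form $\sum_{i=1}^I a_i/b_i^m$ (with $I\ge 0$), where $a_i,b_i\in\mathbb{K}(x,y)[z]$, $\deg_z(a_i)<\deg_z(b_i)$, and the $b_i$ are distinct irreducible polynomials in $\mathbb{K}(x,y)[z]$. Let $f\in V_m$ and $P=\sum_{i,j,k}p_{i,j,k}S_x^iS_y^jS_z^k$ with $p_{i,j,k}\in\mathbb{K}(x,y)$. Then $P(f)\in V_m$.
   Context: The action of $P$ on a rational function $f\in\mathbb{K}(x,y,z)$ is $P(f)=\sum_{i,j,k}p_{i,j,k}\,f(x+i,y+j,z+k)$. *)

(* Defs.v *)
From HB Require Import structures.
From mathcomp Require Import all_boot all_order all_algebra.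
Set Implicit Arguments. Unset Strict Implicit. Unset Printing Implicit Defensive.
Import Order.TTheory GRing.Theory Num.Theory.
Local Open Scope ring_scope.
Local Notation "x %:F" := (@FracField.tofrac _ x).

(* Lifting a (injective ring) map between integral domains to their fraction
   fields: n/d |-> s(n)/s(d), computed on the canonical representative. *)
Definition frac_map (R S : idomainType) (s : R -> S) (f : {fraction R})
  : {fraction S} :=
  let r := repr f in (s \n_r)%:F / (s \d_r)%:F.

(* K[x,y] = {poly {poly K}} : inner variable x, outer variable y. *)
Definition polyxy (K : fieldType) := {poly {poly K}}.
Definition ratxy (K : fieldType) := {fraction {poly {poly K}}}.
Definition polyz (K : fieldType) := {poly {fraction {poly {poly K}}}}.
Definition ratxyz (K : fieldType) := {fraction {poly {fraction {poly {poly K}}}}}.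

(* q(x,y) |-> q(x+i, y+j) on K[x,y] *)
Definition shift_xy_poly (K : fieldType) (i j : nat) (q : {poly {poly K}})
  : {poly {poly K}} :=
  (map_poly (fun c : {poly K} => c \Po ('X + (i%:R)%:P)) q) \Po ('X + (j%:R)%:P).

Definition shift_xy (K : fieldType) (i j : nat)
  (f : {fraction {poly {poly K}}}) : {fraction {poly {poly K}}} :=
  frac_map (shift_xy_poly i j) f.

Definition shift_xyz_poly (K : fieldType) (i j k : nat)
  (a : {poly {fraction {poly {poly K}}}}) : {poly {fraction {poly {poly K}}}} :=
  (map_poly (shift_xy i j) a) \Po ('X + (k%:R)%:P).

Definition shift_xyz (K : fieldType) (i j k : nat)
  (f : {fraction {poly {fraction {poly {poly K}}}}})
  : {fraction {poly {fraction {poly {poly K}}}}} :=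
  frac_map (shift_xyz_poly i j k) f.

Definition apply_op (K : fieldType) (n : nat)
  (p : nat -> nat -> nat -> {fraction {poly {poly K}}})
  (f : {fraction {poly {fraction {poly {poly K}}}}})
  : {fraction {poly {fraction {poly {poly K}}}}} :=
  \sum_(i < n) \sum_(j < n) \sum_(k < n)
     ((p i j k)%:P)%:F * shift_xyz i j k f.

Definition in_Vm (K : fieldType) (m : nat)
  (f : {fraction {poly {fraction {poly {poly K}}}}}) : Prop :=
  exists s : seq ({poly {fraction {poly {poly K}}}} * {poly {fraction {poly {poly K}}}}),
    [/\ forall ab, ab \in s -> (size ab.1 < size ab.2)%N,
        forall ab, ab \in s -> irreducible_poly ab.2,
        uniq (map snd s) &
        f = \sum_(ab <- s) (ab.1)%:F / (ab.2)%:F ^+ m].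

(* Main.v *)
Require Import Defs.
From HB Require Import structures.
From mathcomp Require Import all_boot all_order all_algebra.
Set Implicit Arguments. Unset Strict Implicit. Unset Printing Implicit Defensive.
Import GRing.Theory.
Local Open Scope ring_scope.
Local Notation "x %:F" := (@FracField.tofrac _ x).

Section FM.
Variables (R S : idomainType).

Lemma fracE (x : {fraction R}) :
  x = (\n_(repr x))%:F / (\d_(repr x))%:F.
Proof.
rewrite -[x in LHS]reprK; set r := repr x.
have dn0 := denom_ratioP r.
unlock FracField.tofrac.
rewrite /GRing.inv /= -FracField.pi_inv /GRing.mul /= -FracField.pi_mul.
congr (_ _).
rewrite /FracField.mulf /FracField.invf !numden_Ratio ?oner_neq0 //.
by rewrite mulr1 mul1r Ratio_numden.
Qed.
Variable s : {rmorphism R -> S}.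
Hypothesis s_inj : injective s.

Lemma s_neq0 d : d != 0 -> s d != 0.
Proof. by apply: contra => /eqP; rewrite -(rmorph0 s) => /s_inj ->. Qed.

Lemma fm_char n d : d != 0 ->
  frac_map s (n%:F / d%:F) = (s n)%:F / (s d)%:F.
Proof.
move=> dn0; rewrite /frac_map; set r := repr _.
have rd := denom_ratioP r.
have E := fracE (n%:F / d%:F); rewrite -/r in E.
apply/eqP; rewrite eqr_div ?tofrac_eq0 ?s_neq0 //.
have E' : \n_r * d = \d_r * n.
  move/eqP: E; rewrite eq_sym eqr_div ?tofrac_eq0 //.
  by rewrite -!tofracM tofrac_eq => /eqP ->; rewrite mulrC.
by rewrite -!tofracM tofrac_eq -!rmorphM E' mulrC.
Qed.

Lemma fmD x y : frac_map s (x + y) = frac_map s x + frac_map s y.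
Proof.
rewrite (fracE x) (fracE y).
set a := \n_ _; set b := \d_ _; set c := \n_ _; set d := \d_ _.
have bn0 : b != 0 by apply: denom_ratioP.
have dn0 : d != 0 by apply: denom_ratioP.
have -> : a%:F / b%:F + c%:F / d%:F = (a * d + c * b)%:F / (b * d)%:F.
  by rewrite addf_div ?tofrac_eq0 // !tofracD !tofracM.
rewrite !fm_char ?mulf_neq0 // rmorphD !rmorphM addf_div ?tofrac_eq0 ?s_neq0 //.
by rewrite !tofracD !tofracM.
Qed.

Lemma fmM x y : frac_map s (x * y) = frac_map s x * frac_map s y.
Proof.
rewrite (fracE x) (fracE y).
set a := \n_ _; set b := \d_ _; set c := \n_ _; set d := \d_ _.
have bn0 : b != 0 by apply: denom_ratioP.
have dn0 : d != 0 by apply: denom_ratioP.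
have -> : a%:F / b%:F * (c%:F / d%:F) = (a * c)%:F / (b * d)%:F.
  by rewrite !tofracM invfM mulrACA.
rewrite !fm_char ?mulf_neq0 // !rmorphM.
by rewrite invfM mulrACA.
Qed.

Lemma fmF n : frac_map s n%:F = (s n)%:F.
Proof. by rewrite -[n%:F]divr1 -tofrac1 fm_char ?oner_neq0 // rmorph1 tofrac1 divr1. Qed.

Lemma fm1 : frac_map s 1 = 1.
Proof. by rewrite -tofrac1 fmF rmorph1. Qed.
Lemma fm0 : frac_map s 0 = 0.
Proof. by rewrite -tofrac0 fmF rmorph0. Qed.
End FM.

Lemma frac_map_ext (R S : idomainType) (s1 s2 : R -> S) :
  s1 =1 s2 -> frac_map s1 =1 frac_map s2.
Proof. by move=> E x; rewrite /frac_map !E. Qed.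

Lemma frac_map_sum (R S : idomainType) (s : {rmorphism R -> S}) (s_inj : injective s)
  (I : Type) (r : seq I) (F : I -> {fraction R}) :
  frac_map s (\sum_(i <- r) F i) = \sum_(i <- r) frac_map s (F i).
Proof. by apply: (big_morph _ (fmD s_inj) (fm0 s_inj)). Qed.

Section XY.
Variable K : fieldType.
Definition gp (a b : K) (q : {poly {poly K}}) : {poly {poly K}} :=
  map_poly (comp_poly ('X + a%:P)) q \Po ('X + (b%:P)%:P).

Lemma gp_zmod a b : zmod_morphism (gp a b).
Proof. by move=> p q; rewrite /gp raddfB /= comp_polyB. Qed.
Lemma gp_monoid a b : monoid_morphism (gp a b).
Proof. by split; [rewrite /gp rmorph1 comp_polyC | move=> p q; rewrite /gp rmorphM comp_polyM]. Qed.
HB.instance Definition _ a b := GRing.isZmodMorphism.Build _ _ (gp a b) (gp_zmod a b).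
HB.instance Definition _ a b := GRing.isMonoidMorphism.Build _ _ (gp a b) (gp_monoid a b).

Lemma gpK a b q : gp (-a) (-b) (gp a b q) = q.
Proof.
rewrite /gp map_comp_poly rmorphD /= map_polyX map_polyC /= comp_polyC.
rewrite -map_poly_comp (eq_map_poly (g := id)) ?map_poly_id //; last first.
  by move=> c /=; rewrite polyCN comp_polyXaddC_K.
by rewrite !polyCN comp_polyXaddC_K.
Qed.

Lemma gp_inj a b : injective (gp a b).
Proof. by move=> p q E; rewrite -(gpK a b p) E gpK. Qed.

Definition gf (a b : K) (x : {fraction {poly {poly K}}}) : {fraction {poly {poly K}}} :=
  frac_map (gp a b) x.

Lemma gf_zmod a b : zmod_morphism (gf a b).
Proof.
move=> x y; rewrite /gf fmD; last exact: gp_inj.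
congr (_ + _); apply/eqP; rewrite -addr_eq0 -fmD; last exact: gp_inj.
by rewrite addNr fm0 //; exact: gp_inj.
Qed.
Lemma gf_monoid a b : monoid_morphism (gf a b).
Proof. by split; [rewrite /gf fm1 // | move=> x y; rewrite /gf fmM //]; exact: gp_inj. Qed.
HB.instance Definition _ a b := GRing.isZmodMorphism.Build _ _ (gf a b) (gf_zmod a b).
HB.instance Definition _ a b := GRing.isMonoidMorphism.Build _ _ (gf a b) (gf_monoid a b).

Lemma gfK a b x : gf (-a) (-b) (gf a b x) = x.
Proof.
have E := fracE x; have dn0 := denom_ratioP (repr x).
set n := \n_(repr x) in E dn0 *; set d := \d_(repr x) in E dn0 *.
have I1 := @gp_inj a b; have I2 := @gp_inj (-a) (-b).
rewrite [in LHS]E /gf [frac_map (gp a b) _](fm_char I1) //.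
rewrite (fm_char I2); last exact: (s_neq0 I1).
by rewrite /= !gpK -E.
Qed.

Definition g3 (a b : K) (c : {fraction {poly {poly K}}})
  (q : {poly {fraction {poly {poly K}}}}) : {poly {fraction {poly {poly K}}}} :=
  map_poly (gf a b) q \Po ('X + c%:P).

Lemma g3_zmod a b c : zmod_morphism (g3 a b c).
Proof. by move=> p q; rewrite /g3 raddfB /= comp_polyB. Qed.
Lemma g3_monoid a b c : monoid_morphism (g3 a b c).
Proof. by split; [rewrite /g3 rmorph1 comp_polyC | move=> p q; rewrite /g3 rmorphM comp_polyM]. Qed.
HB.instance Definition _ a b c := GRing.isZmodMorphism.Build _ _ (g3 a b c) (g3_zmod a b c).
HB.instance Definition _ a b c := GRing.isMonoidMorphism.Build _ _ (g3 a b c) (g3_monoid a b c).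

Lemma g3K a b c q : gf (-a) (-b) c = c -> g3 (-a) (-b) (-c) (g3 a b c q) = q.
Proof.
move=> Hc.
rewrite /g3 map_comp_poly rmorphD /= map_polyX map_polyC /= Hc.
rewrite -map_poly_comp (eq_map_poly (g := id)) ?map_poly_id //; last first.
  by move=> x /=; rewrite gfK.
by rewrite !polyCN comp_polyXaddC_K.
Qed.

Lemma g3_size a b c q : size (g3 a b c q) = size q.
Proof.
rewrite /g3 size_comp_poly2 ?size_XaddC // size_map_inj_poly //.
  exact: fmorph_inj.
exact: rmorph0.
Qed.

Lemma g3_natK (i j k : nat) r :
  g3 (-i%:R) (-j%:R) (-k%:R) (g3 i%:R j%:R k%:R r) = r.
Proof. by apply: g3K; rewrite rmorph_nat. Qed.

Lemma g3_natK' (i j k : nat) r :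
  g3 i%:R j%:R k%:R (g3 (-i%:R) (-j%:R) (-k%:R) r) = r.
Proof.
have := @g3K (-i%:R) (-j%:R) (-k%:R) r; rewrite !opprK; apply.
by rewrite rmorphN rmorph_nat.
Qed.

Lemma g3_nat_inj (i j k : nat) : injective (g3 i%:R j%:R k%:R).
Proof. by move=> p q E; rewrite -(g3_natK i j k p) E g3_natK. Qed.

Lemma g3_nat_surj (i j k : nat) q : exists r, q = g3 i%:R j%:R k%:R r.
Proof. by exists (g3 (- i%:R) (- j%:R) (- k%:R) q); rewrite g3_natK'. Qed.

Lemma shift_xy_polyE i j q : shift_xy_poly i j q = gp i%:R j%:R q.
Proof. by rewrite /shift_xy_poly /gp -[(j%:R : {poly K})]polyC_natr. Qed.

Lemma shift_xyE i j x : shift_xy i j x = gf i%:R j%:R x.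
Proof. by apply: frac_map_ext => q; rewrite shift_xy_polyE. Qed.

Lemma shift_xyz_polyE i j k q : shift_xyz_poly i j k q = g3 i%:R j%:R k%:R q.
Proof. by rewrite /shift_xyz_poly /g3 (eq_map_poly (@shift_xyE i j)). Qed.

Lemma shift_xyzE i j k x : shift_xyz i j k x = frac_map (g3 i%:R j%:R k%:R) x.
Proof. by apply: frac_map_ext => q; rewrite shift_xyz_polyE. Qed.
End XY.

Lemma irr_map (F : fieldType) (s : {rmorphism {poly F} -> {poly F}})
  (s_size : forall p, size (s p) = size p)
  (s_surj : forall q, exists r, q = s r) p :
  irreducible_poly p -> irreducible_poly (s p).
Proof.
have s_inj : injective s.
  move=> u v E; apply/eqP; rewrite -subr_eq0 -size_poly_eq0 -s_size rmorphB E.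
  by rewrite subrr size_poly0.
have s_dvd u v : u %| v -> s u %| s v.
  by case/dvdpP => w ->; rewrite rmorphM dvdp_mulIr.
case=> sz H; split; first by rewrite s_size.
move=> q q1 /dvdpP [c Hc].
have [r Er] := s_surj q; have [c' Ec] := s_surj c.
move: Hc; rewrite Er Ec -rmorphM => /s_inj Hp.
have : r %= p.
  apply: H; first by rewrite -s_size -Er.
  by rewrite Hp dvdp_mulIr.
by case/andP => H1 H2; apply/andP; split; apply: s_dvd.
Qed.

Section Vm.
Variables (K : fieldType) (m : nat).
Local Notation PZ := {poly {fraction {poly {poly K}}}}.

Definition okV (s : seq (PZ * PZ)) :=
  [/\ forall ab, ab \in s -> (size ab.1 < size ab.2)%N,
      forall ab, ab \in s -> irreducible_poly ab.2 & uniq (map snd s)].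

Definition sumV (s : seq (PZ * PZ)) : {fraction PZ} :=
  \sum_(ab <- s) (ab.1)%:F / (ab.2)%:F ^+ m.

Lemma in_VmP (f : {fraction PZ}) : in_Vm m f <-> exists s, okV s /\ f = sumV s.
Proof.
split; first by case=> s [H1 H2 H3 H4]; exists s.
by case=> s [[H1 H2 H3] H4]; exists s.
Qed.

Lemma add1_aux (a b : PZ) (s : seq (PZ * PZ)) :
  (size a < size b)%N -> irreducible_poly b -> okV s ->
  exists t, [/\ okV t, {subset map snd t <= b :: map snd s} &
             sumV t = sumV s + a%:F / b%:F ^+ m].
Proof.
move=> ab ib; elim: s => [|[a' b'] s IH] /=.
  move=> _; exists [:: (a, b)]; split.
  - split => //= x; rewrite inE => /eqP -> //.
  - by [].
  - by rewrite /sumV big_cons !big_nil addr0 add0r.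
case=> H1 H2 /= /andP [nb' us].
have [eb|neb] := eqVneq b' b.
  subst b'; exists ((a' + a, b) :: s); split.
  - split => /=; last by rewrite nb'.
    + move=> x; rewrite inE => /orP [/eqP -> /=|xs]; last by apply: H1; rewrite inE xs orbT.
      rewrite (leq_ltn_trans (size_add _ _)) // gtn_max ab andbT.
      by have := H1 (a', b); rewrite inE eqxx => /(_ isT).
    + move=> x; rewrite inE => /orP [/eqP -> //|xs]; by apply: H2; rewrite inE xs orbT.
  - by move=> x /= xin; rewrite inE xin orbT.
  - by rewrite /sumV !big_cons /= tofracD mulrDl addrAC.
have okS : okV s.
  split => // x xs; [apply: H1 | apply: H2]; by rewrite inE xs orbT.
have [t [[T1 T2 T3] Tsub Tsum]] := IH okS.
exists ((a', b') :: t); split.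
- split => /=.
  + move=> x; rewrite inE => /orP [/eqP -> |xt]; last exact: T1.
    by apply: H1; rewrite inE eqxx.
  + move=> x; rewrite inE => /orP [/eqP -> |xt]; last exact: T2.
    by apply: H2; rewrite inE eqxx.
  + rewrite T3 andbT; apply/negP => /Tsub; rewrite inE (negbTE neb) /=.
    by apply/negP.
- move=> x; rewrite inE => /orP [/eqP ->|/Tsub]; first by rewrite !inE eqxx orbT.
  by rewrite !inE => /orP [->|->]; rewrite ?orbT.
- by rewrite /sumV !big_cons -/(sumV t) -/(sumV s) Tsum addrA.
Qed.

Lemma Vm0 : in_Vm m (0 : {fraction PZ}).
Proof. by apply/in_VmP; exists [::]; split => //; rewrite /sumV big_nil. Qed.

Lemma Vm_add (f g : {fraction PZ}) : in_Vm m f -> in_Vm m g -> in_Vm m (f + g).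
Proof.
move=> Hf /in_VmP [s [[H1 H2 _] ->]].
elim: s f Hf H1 H2 => [|x s IH] f Hf H1 H2; first by rewrite /sumV big_nil addr0.
rewrite /sumV big_cons -/(sumV s) addrA; apply: IH.
- move/in_VmP: Hf => [t [okt ->]].
  have [u [oku _ Eu]] := add1_aux (H1 x (mem_head _ _)) (H2 x (mem_head _ _)) okt.
  by apply/in_VmP; exists u; split.
- by move=> y ys; apply: H1; rewrite inE ys orbT.
- by move=> y ys; apply: H2; rewrite inE ys orbT.
Qed.

Lemma Vm_scale (c : {fraction {poly {poly K}}}) (f : {fraction PZ}) :
  in_Vm m f -> in_Vm m ((c%:P)%:F * f).
Proof.
case/in_VmP => s [[H1 H2 H3] ->]; apply/in_VmP.
exists (map (fun ab => (c%:P * ab.1, ab.2)) s); split.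
  split.
  - move=> x /mapP [y ys ->] /=; rewrite mul_polyC.
    exact: leq_ltn_trans (size_scale_leq _ _) (H1 y ys).
  - by move=> x /mapP [y ys ->] /=; apply: H2.
  - by rewrite -map_comp.
by rewrite /sumV big_map mulr_sumr; apply: eq_bigr => x _ /=; rewrite tofracM mulrA.
Qed.

Lemma Vm_map (g : {rmorphism PZ -> PZ}) (f : {fraction PZ}) :
  (forall p, size (g p) = size p) -> (forall q, exists r, q = g r) ->
  injective g -> in_Vm m f -> in_Vm m (frac_map g f).
Proof.
move=> gsz gsurj ginj.
case/in_VmP => s [[H1 H2 H3] ->]; apply/in_VmP.
exists (map (fun ab => (g ab.1, g ab.2)) s); split.
  split.
  - by move=> x /mapP [y ys ->] /=; rewrite !gsz; apply: H1.
  - move=> x /mapP [y ys ->] /=; apply: irr_map => //; exact: H2.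
  - by rewrite -map_comp (eq_map (g := g \o snd)) // map_comp map_inj_uniq.
rewrite /sumV (frac_map_sum ginj) big_map; apply: eq_big_seq => x xs /=.
rewrite -rmorphXn (fm_char ginj) ?rmorphXn // expf_neq0 //.
by have := H2 x xs; case=> + _; rewrite -size_poly_gt0; apply: ltnW.
Qed.

Lemma Vm_shift i j k (f : {fraction PZ}) : in_Vm m f -> in_Vm m (shift_xyz i j k f).
Proof.
move=> Hf; rewrite shift_xyzE.
pose G : {rmorphism PZ -> PZ} := g3 i%:R j%:R k%:R.
exact: (@Vm_map G f (@g3_size K i%:R j%:R k%:R) (@g3_nat_surj K i j k) (@g3_nat_inj K i j k) Hf).
Qed.
End Vm.

Unset Implicit Arguments.
Set Strict Implicit.
Theorem lemma5p1 (K : fieldType) (m : nat)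
  (charK : [pchar K] =i pred0) (m_gt0 : (0 < m)%N)
  (f : {fraction {poly {fraction {poly {poly K}}}}})
  (n : nat) (p : nat -> nat -> nat -> {fraction {poly {poly K}}}) :
  in_Vm m f -> in_Vm m (apply_op n p f).
Proof.
move=> Hf; rewrite /apply_op.
apply: big_ind => [|x y|i _]; [exact: Vm0 | exact: Vm_add |].
apply: big_ind => [|x y|j _]; [exact: Vm0 | exact: Vm_add |].
apply: big_ind => [|x y|k _]; [exact: Vm0 | exact: Vm_add |].
by apply: Vm_scale; apply: Vm_shift.
Qed.
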